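(* Let $c>0$ be a fixed constant. Let $(u_n)_{n\ge1}$ be a sequence of positive real numbers and let $A,B>0$, $\alpha\in(0,\frac12)$ be such that for all integers $a,b\ge1$, $$u_{a+b}\le(u_a+u_b+A)+(a^{2\alpha}+b^{2\alpha})B^2+(a^\alpha+b^\alpha)B(u_a+u_b+A)^{1/2}+cu_a^{1/2}+cu_b^{1/2}.$$ Then there is a constant $c_\alpha$ depending only on $\alpha$ (and on $c$) such that $u_n\le c_\alpha(1+u_1+A+B^2)\,n$ for all $n\ge1$. *)

(* Defs.v *)
From Stdlib Require Export Reals.
Open Scope R_scope.

(* The recursive hypothesis of the theorem, for a sequence u indexed by
   integers >= 1 (the value u 0 is irrelevant). *)
Definition subadd_hyp (c A B alpha : R) (u : nat -> R) : Prop :=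
  forall a b : nat, (1 <= a)%nat -> (1 <= b)%nat ->
    u (a + b)%nat <=
      (u a + u b + A)
      + (Rpower (INR a) (2 * alpha) + Rpower (INR b) (2 * alpha)) * B ^ 2
      + (Rpower (INR a) alpha + Rpower (INR b) alpha) * B * sqrt (u a + u b + A)
      + c * sqrt (u a) + c * sqrt (u b).

(* Main.v *)
Require Import Defs.
From Stdlib Require Import Reals Lra Lia Psatz.
Open Scope R_scope.

Lemma rp_pos x e : 0 < Rpower x e.
Proof. unfold Rpower; apply exp_pos. Qed.

Lemma rp_1 e : Rpower 1 e = 1.
Proof. unfold Rpower; rewrite ln_1, Rmult_0_r; apply exp_0. Qed.

Lemma rp_neg_anti x y e : 0 < x <= y -> e <= 0 -> Rpower y e <= Rpower x e.
Proof.
  intros Hxy He.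
  replace e with (- (- e)) by ring.
  rewrite (Rpower_Ropp y (-e)), (Rpower_Ropp x (-e)).
  apply Rinv_le_contravar. apply rp_pos.
  apply Rle_Rpower_l; lra.
Qed.

Lemma sqrt_bound x eps : 0 <= x -> 0 < eps -> sqrt x <= eps * x + / (4 * eps).
Proof.
  intros Hx He.
  pose proof (sqrt_sqrt x Hx). pose proof (sqrt_pos x).
  assert (0 <= eps * (sqrt x - / (2*eps))^2) by (apply Rmult_le_pos; [lra| apply pow2_ge_0]).
  assert (eps * (sqrt x - / (2*eps))^2 = eps * x - sqrt x + / (4 * eps)).
  { replace (eps * x) with (eps * (sqrt x * sqrt x)) by (rewrite H; ring). field. lra. }
  lra.
Qed.

Lemma split_nat n : (2 <= n)%nat -> exists a b, (1 <= a)%nat /\ (1 <= b)%nat /\ (a + b = n)%nat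
  /\ (4 * a <= 3 * n)%nat /\ (4 * b <= 3 * n)%nat.
Proof.
  intros Hn. destruct (Nat.Even_or_Odd n) as [[k Hk]|[k Hk]].
  - exists k, k. lia.
  - exists k, (k+1)%nat. lia.
Qed.

Theorem mainTheorem13 :
  forall c alpha : R, 0 < c -> 0 < alpha < 1 / 2 ->
  exists C : R,
    forall (u : nat -> R) (A B : R),
      (forall n : nat, (1 <= n)%nat -> 0 < u n) ->
      0 < A -> 0 < B ->
      subadd_hyp c A B alpha u ->
      forall n : nat, (1 <= n)%nat ->
        u n <= C * (1 + u 1%nat + A + B ^ 2) * INR n.
Proof.
  intros c alpha Hc Hal.
  set (beta := alpha + 1/2).
  set (g1 := Rpower (3/4) (beta - 1)).
  set (gam := g1 - 1).
  assert (Hgam : 0 < gam).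
  { unfold gam, g1. replace (beta - 1) with (- (1 - beta)) by ring.
    rewrite Rpower_Ropp.
    assert (Rpower (3/4) (1 - beta) < 1).
    { assert (Rpower (3/4) (1 - beta) < Rpower 1 (1 - beta)) by (apply Rlt_Rpower_l; unfold beta; lra).
      rewrite rp_1 in H; exact H. }
    pose proof (rp_pos (3/4) (1-beta)).
    assert (1 < / Rpower (3 / 4) (1 - beta)).
    { rewrite <- Rinv_1 at 1. apply Rinv_lt_contravar; nra. }
    lra. }
  set (eps := gam / (4 * (1 + c))).
  assert (Heps : 0 < eps) by (unfold eps; apply Rdiv_lt_0_compat; lra).
  set (D := 2 * (3 + gam + 2 * (1 + c) ^ 2 / gam) / gam).
  assert (HD : 0 < D).
  { unfold D. apply Rdiv_lt_0_compat; [|lra].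
    assert (0 < 2 * (1 + c) ^ 2 / gam) by (apply Rdiv_lt_0_compat; nra). lra. }
  set (M := D + 1).
  set (E := 3 + 2 * sqrt (M + 1) + 2 * c * sqrt M).
  assert (HE : E <= D * gam).
  { unfold E, M.
    assert (sqrt (D + 1) <= sqrt (D + 1 + 1)) by (apply sqrt_le_1_alt; lra).
    pose proof (sqrt_bound (D+1+1) eps ltac:(lra) Heps).
    assert (HDg : D * gam = 2 * (3 + gam + 2 * (1 + c) ^ 2 / gam)) by (unfold D; field; lra).
    assert (Heq: (2 + 2 * c) * (eps * (D + 1 + 1) + / (4 * eps))
               = gam / 2 * (D + 2) + 2 * (1 + c) ^ 2 / gam) by (unfold eps; field; lra).
    assert ((2 + 2*c) * sqrt (D + 1 + 1) <= (2 + 2 * c) * (eps * (D + 1 + 1) + / (4 * eps)))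
      by (apply Rmult_le_compat_l; lra).
    assert (c * sqrt (D+1) <= c * sqrt (D+1+1)) by (apply Rmult_le_compat_l; lra).
    nra. }
  exists M.
  assert (HM : 1 < M) by (unfold M; lra).
  intros u A B Hu HA HB Hyp.
  set (K := 1 + u 1%nat + A + B ^ 2).
  pose proof (Hu 1%nat (le_n 1)) as Hu1.
  assert (HK1 : 1 <= K) by (unfold K; nra).
  set (g := fun n : nat => M * INR n - D * Rpower (INR n) beta).
  assert (Hmain : forall N n, (n <= N)%nat -> (1 <= n)%nat -> u n <= K * g n).
  2:{ intros n Hn. pose proof (Hmain n n (le_n n) Hn).
      unfold g in H. pose proof (rp_pos (INR n) beta).
      assert (0 <= INR n) by apply pos_INR.
      assert (0 <= K * (D * Rpower (INR n) beta)) by (apply Rmult_le_pos; nra).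
      fold K. nra. }
  induction N as [|N IH]; intros n HnN Hn1.
  { lia. }
  destruct (Nat.eq_dec n 1) as [->|Hn].
  { unfold g. simpl INR. rewrite rp_1. unfold M. unfold K.
    pose proof (pow2_ge_0 B). lra. }
  destruct (split_nat n ltac:(lia)) as (a & b & Ha1 & Hb1 & Hab & Ha4 & Hb4).
  assert (IHa : u a <= K * g a) by (apply IH; lia).
  assert (IHb : u b <= K * g b) by (apply IH; lia).
  pose proof (Hyp a b Ha1 Hb1) as Hy. rewrite Hab in Hy.
  set (xa := INR a) in *. set (xb := INR b) in *. set (Nn := INR n).
  assert (Hxa : 1 <= xa) by (unfold xa; apply (le_INR 1); lia).
  assert (Hxb : 1 <= xb) by (unfold xb; apply (le_INR 1); lia).
  assert (HN : Nn = xa + xb) by (unfold Nn, xa, xb; rewrite <- plus_INR; f_equal; lia).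
  assert (Hxa4 : 4 * xa <= 3 * Nn).
  { unfold xa, Nn. replace 4 with (INR 4) by (simpl; lra). replace 3 with (INR 3) by (simpl; lra).
    rewrite <- !mult_INR. apply le_INR. lia. }
  assert (Hxb4 : 4 * xb <= 3 * Nn).
  { unfold xb, Nn. replace 4 with (INR 4) by (simpl; lra). replace 3 with (INR 3) by (simpl; lra).
    rewrite <- !mult_INR. apply le_INR. lia. }
  set (ua := u a) in *. set (ub := u b) in *.
  assert (Hua : 0 < ua) by (apply Hu; lia).
  assert (Hub : 0 < ub) by (apply Hu; lia).
  set (ga := g a) in *. set (gb := g b) in *.
  assert (Hga : 0 < ga) by (apply (Rmult_lt_reg_l K); lra).
  assert (Hgb : 0 < gb) by (apply (Rmult_lt_reg_l K); lra).
  set (Q := Rpower Nn beta).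
  set (P := Rpower Nn alpha).
  assert (HQ1 : 1 <= Q).
  { unfold Q. rewrite <- (Rpower_O Nn) by lra. apply Rle_Rpower; unfold beta; lra. }
  assert (HPs : P * sqrt Nn = Q).
  { unfold P, Q, beta. rewrite <- Rpower_sqrt by lra. rewrite <- Rpower_plus. f_equal. lra. }
  assert (HsQ : sqrt Nn <= Q).
  { unfold Q. rewrite <- Rpower_sqrt by lra. apply Rle_Rpower; unfold beta; lra. }
  assert (H2a : Rpower Nn (2 * alpha) <= Q).
  { unfold Q. apply Rle_Rpower; unfold beta; lra. }
  assert (HPpos : 0 < P) by apply rp_pos.
  assert (Hpa : Rpower xa alpha <= P) by (apply Rle_Rpower_l; lra).
  assert (Hpb : Rpower xb alpha <= P) by (apply Rle_Rpower_l; lra).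
  assert (Hpa2 : Rpower xa (2*alpha) <= Q)
    by (apply Rle_trans with (Rpower Nn (2 * alpha)); [apply Rle_Rpower_l; lra | lra]).
  assert (Hpb2 : Rpower xb (2*alpha) <= Q)
    by (apply Rle_trans with (Rpower Nn (2 * alpha)); [apply Rle_Rpower_l; lra | lra]).
  assert (Hkey : forall x, 1 <= x -> 4 * x <= 3 * Nn -> x * g1 * Q / Nn <= Rpower x beta).
  { intros x Hx1 Hx4.
    assert (Rpower (3/4 * Nn) (beta - 1) <= Rpower x (beta - 1))
      by (apply rp_neg_anti; unfold beta; lra).
    rewrite <- Rpower_mult_distr in H by lra. fold g1 in H.
    assert (Hb : Rpower x beta = x * Rpower x (beta - 1)).
    { rewrite <- (Rpower_1 x) at 2 by lra. rewrite <- Rpower_plus. f_equal; ring. }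
    assert (HQ : Q = Nn * Rpower Nn (beta - 1)).
    { unfold Q. rewrite <- (Rpower_1 Nn) at 2 by lra. rewrite <- Rpower_plus. f_equal; ring. }
    rewrite Hb, HQ.
    replace (x * g1 * (Nn * Rpower Nn (beta - 1)) / Nn) with (x * (g1 * Rpower Nn (beta - 1))) by (field; lra).
    apply Rmult_le_compat_l; lra. }
  assert (Hsum : g1 * Q <= Rpower xa beta + Rpower xb beta).
  { pose proof (Hkey xa Hxa Hxa4). pose proof (Hkey xb Hxb Hxb4).
    assert (xa * g1 * Q / Nn + xb * g1 * Q / Nn = g1 * Q) by (rewrite HN; field; lra).
    lra. }
  assert (Hga_le : ga <= M * xa) by (unfold ga, g; fold xa; pose proof (rp_pos xa beta); nra).
  assert (Hgb_le : gb <= M * xb) by (unfold gb, g; fold xb; pose proof (rp_pos xb beta); nra).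
  assert (Hgab : ga + gb = M * Nn - D * (Rpower xa beta + Rpower xb beta))
    by (unfold ga, gb, g; fold xa xb; rewrite HN; ring).
  assert (HMN : M * Nn = M * xa + M * xb) by (rewrite HN; ring).
  assert (HNge : 1 <= Nn) by lra.
  assert (HsK : sqrt K * sqrt K = K) by (apply sqrt_sqrt; lra).
  assert (HsKle : sqrt K <= K).
  { pose proof (sqrt_pos K). nra. }
  assert (HBle : B <= sqrt K).
  { rewrite <- (sqrt_pow2 B) by lra. apply sqrt_le_1_alt. unfold K; lra. }
  assert (HT3 : sqrt (ua + ub + A) <= sqrt K * (sqrt (M + 1) * sqrt Nn)).
  { rewrite <- !sqrt_mult by (try apply Rmult_le_pos; lra). apply sqrt_le_1_alt.
    assert (K * (ga + gb + 1) <= K * ((M + 1) * Nn)) by (apply Rmult_le_compat_l; nra).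
    assert (A <= K) by (unfold K; pose proof (pow2_ge_0 B); lra).
    lra. }
  assert (HT4 : sqrt ua <= K * (sqrt M * sqrt Nn)).
  { apply Rle_trans with (sqrt K * (sqrt M * sqrt Nn)).
    - rewrite <- !sqrt_mult by (try apply Rmult_le_pos; lra). apply sqrt_le_1_alt.
      assert (K * ga <= K * (M * Nn)) by (apply Rmult_le_compat_l; nra).
      assert (K * gb <= K * (M * Nn)) by (apply Rmult_le_compat_l; nra).
      lra.
    - apply Rmult_le_compat_r; [apply Rmult_le_pos; apply sqrt_pos | lra]. }
  assert (HT5 : sqrt ub <= K * (sqrt M * sqrt Nn)).
  { apply Rle_trans with (sqrt K * (sqrt M * sqrt Nn)).
    - rewrite <- !sqrt_mult by (try apply Rmult_le_pos; lra). apply sqrt_le_1_alt.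
      assert (K * ga <= K * (M * Nn)) by (apply Rmult_le_compat_l; nra).
      assert (K * gb <= K * (M * Nn)) by (apply Rmult_le_compat_l; nra).
      lra.
    - apply Rmult_le_compat_r; [apply Rmult_le_pos; apply sqrt_pos | lra]. }
  assert (HB2 : B ^ 2 <= K) by (unfold K; lra).
  assert (T2 : (Rpower xa (2 * alpha) + Rpower xb (2 * alpha)) * B ^ 2 <= 2 * Q * K).
  { pose proof (rp_pos xa (2*alpha)); pose proof (rp_pos xb (2*alpha)).
    apply Rle_trans with ((Rpower xa (2 * alpha) + Rpower xb (2 * alpha)) * K).
    - apply Rmult_le_compat_l; lra.
    - nra. }
  assert (T3 : (Rpower xa alpha + Rpower xb alpha) * B * sqrt (ua + ub + A)
               <= 2 * K * sqrt (M + 1) * Q).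
  { pose proof (rp_pos xa alpha); pose proof (rp_pos xb alpha).
    pose proof (sqrt_pos (ua + ub + A)). pose proof (sqrt_pos K).
    pose proof (sqrt_pos (M+1)). pose proof (sqrt_pos Nn).
    apply Rle_trans with ((2 * P) * sqrt K * (sqrt K * (sqrt (M + 1) * sqrt Nn))).
    - apply Rmult_le_compat.
      + apply Rmult_le_pos; lra.
      + lra.
      + apply Rmult_le_compat; lra.
      + exact HT3.
    - replace (2 * P * sqrt K * (sqrt K * (sqrt (M + 1) * sqrt Nn))) with
        (2 * (sqrt K * sqrt K) * sqrt (M + 1) * (P * sqrt Nn)) by ring.
      rewrite HsK, HPs. lra. }
  assert (T4 : c * sqrt ua + c * sqrt ub <= 2 * c * K * sqrt M * Q).
  { pose proof (sqrt_pos M). pose proof (sqrt_pos Nn).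
    assert (sqrt M * sqrt Nn <= sqrt M * Q) by (apply Rmult_le_compat_l; lra).
    assert (K * (sqrt M * sqrt Nn) <= K * (sqrt M * Q)) by (apply Rmult_le_compat_l; lra).
    assert (c * sqrt ua <= c * (K * (sqrt M * Q))) by (apply Rmult_le_compat_l; lra).
    assert (c * sqrt ub <= c * (K * (sqrt M * Q))) by (apply Rmult_le_compat_l; lra).
    lra. }
  assert (HAK : A <= K * Q) by (unfold K in *; nra).
  unfold g at 1. fold Nn Q.
  assert (Hfin : ua + ub + A + 2 * Q * K + 2 * K * sqrt (M + 1) * Q + 2 * c * K * sqrt M * Q
                 <= K * (M * Nn - D * Q)).
  { assert (ua + ub <= K * (ga + gb)) by lra.
    rewrite Hgab in H.
    assert (K * (D * (Rpower xa beta + Rpower xb beta)) >= K * (D * (g1 * Q))).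
    { apply Rle_ge. apply Rmult_le_compat_l; [lra|]. apply Rmult_le_compat_l; lra. }
    assert (K * Q * E <= K * Q * (D * gam)).
    { apply Rmult_le_compat_l; nra. }
    unfold E, gam in *. nra. }
  lra.
Qed.
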